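(* Let $R$ be a commutative ring and let $M$ be a GV-torsion $R$-module. Then $M$ is $w$-split if and only if there exists $J\in\mathrm{GV}(R)$ with $JM=0$.
   Context: $R$ is a commutative ring with identity. For an $R$-module $M$ and $s\in R$, $\eta^M_s:M\to M$ is multiplication by $s$. An ideal $J$ of $R$ is a GV-ideal if $J$ is finitely generated and the natural map $R\to\mathrm{Hom}_R(J,R)$ is an isomorphism; $\mathrm{GV}(R)$ is the set of GV-ideals. $\mathrm{tor_{GV}}(M)=\{x\in M: Jx=0\text{ for some }J\in\mathrm{GV}(R)\}$, and $M$ is GV-torsion if $\mathrm{tor_{GV}}(M)=M$. A short exact sequence $0\to A\xrightarrow{f}B\xrightarrow{g}C\to 0$ is $w$-split if there exist $J=\langle d_1,\dots,d_n\rangle\in\mathrm{GV}(R)$ and $h_1,\dots,h_n\in\mathrm{Hom}_R(C,B)$ with $gh_k=\eta^C_{d_k}$ for all $k$. A module $M$ is $w$-split if there is a $w$-split exact sequence $0\to K\to P\to M\to 0$ with $P$ projective. *)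

(* Defs.v *)
From HB Require Import structures.
From mathcomp Require Import all_boot all_order all_algebra.
Set Implicit Arguments. Unset Strict Implicit. Unset Printing Implicit Defensive.
Import GRing.Theory.
Local Open Scope ring_scope.

Definition ideal_gen (R : comPzRingType) (d : seq R) : R -> Prop :=
  fun x => exists c : seq R, x = \sum_(i < size d) c`_i * d`_i.

(* An R-linear map J -> R (element of Hom_R(J,R)), given by its values on J. *)
Definition hom_ideal (R : comPzRingType) (J : R -> Prop) (f : R -> R) : Prop :=
  forall a x y, J x -> J y -> f (a * x + y) = a * f x + f y.

(* J is a GV-ideal: finitely generated and the natural map
   R -> Hom_R(J,R), r |-> (x |-> r x), is an isomorphism. *)
Definition GV_ideal (R : comPzRingType) (J : R -> Prop) : Prop :=
  [/\ exists d : seq R, forall x, J x <-> ideal_gen d x,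
      forall r : R, (forall x, J x -> r * x = 0) -> r = 0 &
      forall f : R -> R, hom_ideal J f ->
        exists r : R, forall x, J x -> f x = r * x].

Definition tor_GV (R : comPzRingType) (M : lmodType R) (x : M) : Prop :=
  exists J : R -> Prop, GV_ideal J /\ forall a, J a -> a *: x = 0.

Definition GV_torsion (R : comPzRingType) (M : lmodType R) : Prop :=
  forall x : M, tor_GV x.

Definition projective (R : comPzRingType) (P : lmodType R) : Prop :=
  forall (B C : lmodType R) (g : {linear B -> C}) (f : {linear P -> C}),
    (forall c, exists b, g b = c) ->
    exists h : {linear P -> B}, forall p, g (h p) = f p.

Definition short_exact (R : comPzRingType) (A B C : lmodType R)
  (f : {linear A -> B}) (g : {linear B -> C}) : Prop :=
  [/\ injective f,
      forall c, exists b, g b = c &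
      forall b, g b = 0 <-> exists a, f a = b].

Definition w_split_seq (R : comPzRingType) (A B C : lmodType R)
  (f : {linear A -> B}) (g : {linear B -> C}) : Prop :=
  exists d : seq R, GV_ideal (ideal_gen d) /\
    exists h : 'I_(size d) -> {linear C -> B},
      forall k x, g (h k x) = d`_k *: x.

Definition w_split_module (R : comPzRingType) (M : lmodType R) : Prop :=
  exists (K P : lmodType R) (f : {linear K -> P}) (g : {linear P -> M}),
    [/\ projective P, short_exact f g & w_split_seq f g].

(* Main.v *)
Require Import Defs.
From HB Require Import structures.
From mathcomp Require Import all_boot all_order all_algebra.
From mathcomp Require Import finmap.
From mathcomp Require Import multinomials.monalg.
Set Implicit Arguments. Unset Strict Implicit. Unset Printing Implicit Defensive.
Import GRing.Theory.
Local Open Scope ring_scope.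


Definition Rnz (R : comPzRingType) (h : (1:R) != 0) : Type := R.
HB.instance Definition _ R h := GRing.ComPzRing.on (@Rnz R h).
HB.instance Definition _ R h := GRing.PzSemiRing_isNonZero.Build (@Rnz R h) h.

Definition FS (R : comPzRingType) (h : (1:R) != 0) (P : choiceType) := {malg (Rnz h)[P]}.
HB.instance Definition _ R h P := GRing.Zmodule.on (@FS R h P).

Section FSlmod.
Variables (R : comPzRingType) (h : (1:R) != 0) (P : choiceType).
Definition fs_scale (r : R) (x : FS h P) : FS h P := (r : Rnz h) *: (x : {malg (Rnz h)[P]}).
Fact fs_scaleA a b v : fs_scale a (fs_scale b v) = fs_scale (a * b) v.
Proof. exact: (@scalerA (Rnz h)). Qed.
Fact fs_scale1 : left_id 1 fs_scale.
Proof. move=> v; exact: (@scale1r (Rnz h)). Qed.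
Fact fs_scaleDr : right_distributive fs_scale +%R.
Proof. move=> a u v; exact: (@scalerDr (Rnz h)). Qed.
Fact fs_scaleDl v : {morph fs_scale^~ v: a b / a + b}.
Proof. move=> a b; exact: (@scalerDl (Rnz h)). Qed.
HB.instance Definition _ := GRing.Zmodule_isLmodule.Build R (FS h P)
  fs_scaleA fs_scale1 fs_scaleDr fs_scaleDl.
Lemma fs_coeffZ (a : R) (x : FS h P) k : (a *: x)@_k = (a : Rnz h) * x@_k.
Proof. exact: (@mcoeffZ P (Rnz h)). Qed.
End FSlmod.

Section Ker.
Variables (R : comPzRingType) (V W : lmodType R) (g : {linear V -> W}).
Definition kerp : {pred V} := fun x => g x == 0.
Fact kerp_closed : submod_closed kerp.
Proof.
split; first by rewrite unfold_in /kerp /= linear0.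
by move=> a u v; rewrite !unfold_in /kerp /= linearP => /eqP-> /eqP->; rewrite scaler0 addr0.
Qed.
HB.instance Definition _ := GRing.isSubmodClosed.Build R V kerp kerp_closed.
Definition kerT := {x : V | x \in kerp}.
HB.instance Definition _ := [isSub of kerT for @sval V (fun x => x \in kerp)].
HB.instance Definition _ := [Choice of kerT by <:].
HB.instance Definition _ := [SubChoice_isSubLmodule of kerT by <:].
End Ker.

Section Maps.
Variables (R : comPzRingType) (U V : lmodType R).
Definition zerof : U -> V := fun _ => 0.
Fact zerof_lin : linear zerof.
Proof. by move=> a u v; rewrite /zerof scaler0 addr0. Qed.
HB.instance Definition _ := GRing.isLinear.Build R U V *:%R zerof zerof_lin.
Definition idl : U -> U := fun x => x.
Fact idl_lin : linear idl.
Proof. by []. Qed.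
HB.instance Definition _ := GRing.isLinear.Build R U U *:%R idl idl_lin.
End Maps.

Section KerVal.
Variables (R : comPzRingType) (V W : lmodType R) (g : {linear V -> W}).
Definition kval : kerT g -> V := fun x => val x.
Fact kval_lin : linear kval.
Proof. by move=> a u v; rewrite /kval /= ?SubK. Qed.
HB.instance Definition _ := GRing.isLinear.Build R (kerT g) V *:%R kval kval_lin.
End KerVal.

Section Sum.
Variables (R : comPzRingType) (h : (1:R) != 0) (M : choiceType) (N : lmodType R).
Variable b : M -> N.
Definition sumF (x : FS h M) : N := \sum_(k <- msupp x) (x@_k : R) *: b k.
Lemma sumF_w (d : {fset M}) x : (msupp x `<=` d)%fset ->
  sumF x = \sum_(k <- d) (x@_k : R) *: b k.
Proof.
move=> le; rewrite /sumF [LHS](big_fset_incl _ le) => //= k kd /mcoeff_outdom ->.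
by rewrite scale0r.
Qed.
Fact sumF_lin : linear sumF.
Proof.
move=> a x y.
pose d := (msupp x `|` msupp y)%fset.
have lx : (msupp x `<=` d)%fset by apply: fsubsetUl.
have ly : (msupp y `<=` d)%fset by apply: fsubsetUr.
have lz : (msupp (a *: x + y) `<=` d)%fset.
  apply: fsubset_trans (msuppD_le _ _) _; apply: fsetSU.
  exact: (@msuppZ_le M (Rnz h)).
rewrite (sumF_w lx) (sumF_w ly) (sumF_w lz) scaler_sumr -big_split /=.
apply: eq_bigr => k _; rewrite mcoeffD fs_coeffZ scalerDl scalerA //.
Qed.
HB.instance Definition _ := GRing.isLinear.Build R (FS h M) N *:%R sumF sumF_lin.
End Sum.

Section Main.
Variables (R : comPzRingType).

Lemma triv0 (e : (1:R) = 0) (V : lmodType R) (v : V) : v = 0.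
Proof. by rewrite -[v]scale1r e scale0r. Qed.

Lemma FS_tf (h : (1:R) != 0) (P : choiceType) (J : R -> Prop) :
  GV_ideal J -> forall x : FS h P, (forall a, J a -> a *: x = 0) -> x = 0.
Proof.
case=> _ inj _ x Hx; apply/malgP => k; rewrite mcoeff0.
apply: inj => a Ja; have := congr1 (mcoeff k) (Hx a Ja).
by rewrite fs_coeffZ mcoeff0 mulrC.
Qed.

Lemma sumF_U (h : (1:R) != 0) (M : choiceType) (N : lmodType R) (b : M -> N) (c : R) k :
  sumF b << (c : Rnz h) *g k >> = c *: b k.
Proof. by rewrite (sumF_w _ msuppU_le) big_seq_fset1 mcoeffUU. Qed.

Lemma FS_U (h : (1:R) != 0) (M : choiceType) (c : R) k :
  << (c : Rnz h) *g k >> = c *: (<< (1 : Rnz h) *g k >> : FS h M).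
Proof.
apply/malgP => k'; rewrite fs_coeffZ !mcoeffU.
by case: eqP => _; rewrite ?mulr1n ?mulr0n ?mulr1 ?mulr0.
Qed.

Lemma FS_proj (h : (1:R) != 0) (M : lmodType R) : projective (FS h M).
Proof.
move=> B C g f surj.
have ex k : exists b, g b == f << (1 : Rnz h) *g k >>.
  by have [b hb] := surj (f << (1 : Rnz h) *g k >>); exists b; rewrite hb.
pose b k := xchoose (ex k).
exists (sumF b) => x.
rewrite [in RHS](monalgE x) linear_sum /= /sumF linear_sum /=.
apply: eq_bigr => k _; rewrite linearZ /= (eqP (xchooseP (ex k))).
by rewrite (FS_U h x@_k k) linearZ.
Qed.

Lemma sumF_surj (h : (1:R) != 0) (M : lmodType R) (c : M) :
  exists b : FS h M, sumF (@idfun M) b = c.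
Proof. by exists << (1 : Rnz h) *g c >>; rewrite sumF_U scale1r. Qed.

Lemma proj_tf (P : lmodType R) : projective P ->
  forall (p : P) J, GV_ideal J -> (forall a, J a -> a *: p = 0) -> p = 0.
Proof.
move=> prP p J GVJ Hp.
have [e|h] := eqVneq (1:R) 0; first exact: triv0.
have [hh Hh] := prP _ _ (@sumF R h P P idfun) (@idl R P) (@sumF_surj h P).
have -> : p = @idl R P p by [].
rewrite -Hh (FS_tf GVJ (x := hh p)); first exact: linear0.
move=> a Ja.
by rewrite -linearZ Hp // linear0.
Qed.

Lemma GV_ext (J J' : R -> Prop) : GV_ideal J -> (forall x, J x <-> J' x) -> GV_ideal J'.
Proof.
case=> [[d Hd] inj sur] E; split.
- by exists d => x; rewrite -E.
- by move=> r Hr; apply: inj => x /E; apply: Hr.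
- move=> f hf; have [|r Hr] := sur f.
    by move=> a x y /E Jx /E Jy; apply: hf.
  by exists r => x /E; apply: Hr.
Qed.

Lemma gen_mem (d : seq R) (k : 'I_(size d)) : ideal_gen d d`_k.
Proof.
exists (mkseq (fun i => (i == k)%:R) (size d)).
rewrite (bigD1 k) //= big1 ?addr0.
  by rewrite nth_mkseq // eqxx mul1r.
move=> i /negbTE ik; rewrite nth_mkseq //.
by rewrite (_ : (nat_of_ord i == k) = false) ?mul0r //; apply/negbTE; rewrite -(inj_eq val_inj) /= in ik; rewrite ik.
Qed.

End Main.

Theorem lemma2p4 (R : comPzRingType) (M : lmodType R) :
  GV_torsion M ->
  (w_split_module M <->
   exists J : R -> Prop, GV_ideal J /\ forall a : R, J a -> forall x : M, a *: x = 0).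
Proof.
move=> tor; split.
- case=> K [P [f [g [prP _ [d [GVd [hk Hk]]]]]]].
  exists (ideal_gen d); split => // a [c ->] x.
  rewrite scaler_suml big1 // => i _.
  rewrite -scalerA -Hk.
  have -> : hk i x = 0.
    have [Jx [GVx Hx]] := tor x.
    apply: (proj_tf prP GVx) => b Jb.
    by rewrite -linearZ Hx // linear0.
  by rewrite linear0 scaler0.
- case=> J [GVJ HJ].
  case: GVJ (GVJ) => [[d Hd] _ _] GVJ.
  have GVd : GV_ideal (ideal_gen d) by apply: (GV_ext GVJ).
  have [e|h] := eqVneq (1:R) 0.
    exists M, M, (@idl R M), (@zerof R M M); split.
    + move=> B C g' f' _; exists (@zerof R M B) => p; by rewrite (triv0 e (f' p)) /zerof linear0.
    + split; first by [].
        by move=> c; exists c; rewrite [RHS](triv0 e c).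
      by move=> b; split => _; [exists b | exact: triv0].
    + exists d; split => //; exists (fun _ => @zerof R M M) => k x; by rewrite (triv0 e (d`_k *: x)); exact: triv0.
  exists (kerT (@sumF R h M M idfun)), (FS h M), (@kval R _ _ (@sumF R h M M idfun)),
    (@sumF R h M M idfun); split.
  + exact: FS_proj.
  + split.
    * by move=> u v; rewrite /kval => /val_inj.
    * exact: sumF_surj.
    * move=> b; split.
        move=> hb; have kb : b \in kerp (@sumF R h M M idfun) by rewrite unfold_in /kerp /= hb.
        by exists (exist _ b kb).
      case=> a <-; have := valP a; rewrite unfold_in /kerp /= => /eqP; exact.
  + exists d; split => //; exists (fun _ => @zerof R _ _) => k x.
    rewrite /zerof /= linear0 HJ //; exact: (proj2 (Hd _) (gen_mem k)).
Qed.
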